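(* Let all rate functions below be monotone chemical. Consider: (MII) the network with reactions $1:\ \mathrm{NI}_1+\mathrm{NE}_1+\mathrm{D}_2\to\mathrm{NI}_1+\mathrm{NE}_2+\mathrm{D}_2$ and $2:\ \mathrm{NI}_2+\mathrm{NE}_2+\mathrm{D}_1\to\mathrm{NI}_2+\mathrm{NE}_1+\mathrm{D}_1$, with ODEs \[ [\dot{\mathrm{NE}}_1]=-r_1([\mathrm{NI}_1],[\mathrm{NE}_1],[\mathrm{D}_2])+r_2([\mathrm{NI}_2],[\mathrm{NE}_2],[\mathrm{D}_1]),\quad [\dot{\mathrm{NE}}_2]=-[\dot{\mathrm{NE}}_1],\quad [\dot{\mathrm{NI}}_1]=[\dot{\mathrm{NI}}_2]=[\dot{\mathrm D}_1]=[\dot{\mathrm D}_2]=0; \] (MIV) the network with reactions $1:\ 2\Lambda_1+\mathrm{D}_2\to\Lambda_1+\Lambda_2+\mathrm{D}_2$ and $2:\ 2\Lambda_2+\mathrm{D}_1\to\Lambda_2+\Lambda_1+\mathrm{D}_1$, with ODEs \[ [\dot\Lambda_1]=-r_1([\Lambda_1],[\mathrm{D}_2])+r_2([\Lambda_2],[\mathrm{D}_1]),\quad [\dot\Lambda_2]=-[\dot\Lambda_1],\quad [\dot{\mathrm D}_1]=[\dot{\mathrm D}_2]=0; \] (MV) the network with reactions $1:\ \Lambda_1+\mathrm{NE}_1+\Lambda_2\to\Lambda_1+\mathrm{NE}_2+\Lambda_2$ and $2:\ \Lambda_2+\mathrm{NE}_2+\Lambda_1\to\Lambda_2+\mathrm{NE}_1+\Lambda_1$,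 with ODEs \[ [\dot{\mathrm{NE}}_1]=-r_1([\Lambda_1],[\mathrm{NE}_1],[\Lambda_2])+r_2([\Lambda_2],[\mathrm{NE}_2],[\Lambda_1]),\quad [\dot{\mathrm{NE}}_2]=-[\dot{\mathrm{NE}}_1],\quad [\dot\Lambda_1]=[\dot\Lambda_2]=0. \] Then each of these three systems admits only one single steady state in each invariant set obtained by fixing the constant species and the conserved sum ($[\mathrm{NE}_1]+[\mathrm{NE}_2]$, resp. $[\Lambda_1]+[\Lambda_2]$), for all choices of monotone reaction functions $r_1,r_2$, and thus none of them has the capacity for differentiation.
   Context: A rate function $r_j$ is monotone chemical if it is nonnegative, positive exactly when all its reactant concentrations are positive, independent of non-reactant concentrations, and has positive partial derivative with respect to each reactant concentration at positive concentrations. Capacity for differentiation means the existence of a homogeneous positive steady state (concentrations of species with indices 1 and 2 equal, under identical rate functions for the two symmetric reactions) at which, for some admissible positive values of the partial derivatives of the rates, the Jacobian restricted to the invariant set is singular, enabling a zero-eigenvalue bifurcation to inhomogeneous steady states. *)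

(* Defs.v *)
From Stdlib Require Import Reals.
From Coquelicot Require Import Coquelicot.
Open Scope R_scope.

(** Monotone chemical rate functions.  A rate function only takes the
    concentrations of its reactants as arguments (so it is independent of
    non-reactant concentrations by construction). *)
Definition mono_chem2 (f : R -> R -> R) : Prop :=
  (forall x y, 0 <= x -> 0 <= y -> 0 <= f x y) /\
  (forall x y, 0 <= x -> 0 <= y -> (0 < f x y <-> 0 < x /\ 0 < y)) /\
  (forall x y, 0 < x -> 0 < y ->
     (exists d, 0 < d /\ is_derive (fun t => f t y) x d) /\
     (exists d, 0 < d /\ is_derive (fun t => f x t) y d)).

Definition mono_chem3 (f : R -> R -> R -> R) : Prop :=
  (forall x y z, 0 <= x -> 0 <= y -> 0 <= z -> 0 <= f x y z) /\
  (forall x y z, 0 <= x -> 0 <= y -> 0 <= z ->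
     (0 < f x y z <-> 0 < x /\ 0 < y /\ 0 < z)) /\
  (forall x y z, 0 < x -> 0 < y -> 0 < z ->
     (exists d, 0 < d /\ is_derive (fun t => f t y z) x d) /\
     (exists d, 0 < d /\ is_derive (fun t => f x t z) y d) /\
     (exists d, 0 < d /\ is_derive (fun t => f x y t) z d)).

Definition nonneg {S : Type} (c : S -> R) : Prop := forall s, 0 <= c s.
Definition positive {S : Type} (c : S -> R) : Prop := forall s, 0 < c s.
Definition steady {S : Type} (F : (S -> R) -> S -> R) (c : S -> R) : Prop :=
  forall s, F c s = 0.

(** Uniqueness of (nonnegative) steady states in each invariant set:
    [inv c c'] says c and c' lie in the same invariant set, [adm c]
    says the constant species of the invariant set have positive value. *)
Definition unique_ss {S : Type} (F : (S -> R) -> S -> R)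
  (inv : (S -> R) -> (S -> R) -> Prop) (adm : (S -> R) -> Prop) : Prop :=
  forall c c', nonneg c -> nonneg c' -> adm c -> inv c c' ->
    steady F c -> steady F c' -> forall s, c s = c' s.

(** The invariant set through c is the line
    c + t v (t real), so the restricted Jacobian is singular iff J v = 0,
    i.e. the derivative of t |-> F (c + t v) at t = 0 vanishes. *)
Definition capacity {S RT : Type} (mono : RT -> Prop)
  (F : RT -> RT -> (S -> R) -> S -> R) (homog : (S -> R) -> Prop)
  (v : S -> R) : Prop :=
  exists r : RT, mono r /\ exists c : S -> R,
    positive c /\ homog c /\ steady (F r r) c /\
    forall s, is_derive (fun t => F r r (fun s' => c s' + t * v s') s) 0 0.

Inductive spII := NI1 | NE1 | D2 | NI2 | NE2 | D1.

Definition FII (r1 r2 : R -> R -> R -> R) (c : spII -> R) (s : spII) : R :=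
  match s with
  | NE1 => - r1 (c NI1) (c NE1) (c D2) + r2 (c NI2) (c NE2) (c D1)
  | NE2 => r1 (c NI1) (c NE1) (c D2) - r2 (c NI2) (c NE2) (c D1)
  | _ => 0
  end.

Definition invII (c c' : spII -> R) : Prop :=
  c NI1 = c' NI1 /\ c NI2 = c' NI2 /\ c D1 = c' D1 /\ c D2 = c' D2 /\
  c NE1 + c NE2 = c' NE1 + c' NE2.

Definition admII (c : spII -> R) : Prop :=
  0 < c NI1 /\ 0 < c NI2 /\ 0 < c D1 /\ 0 < c D2.

Definition homII (c : spII -> R) : Prop :=
  c NI1 = c NI2 /\ c NE1 = c NE2 /\ c D1 = c D2.

Definition vII (s : spII) : R :=
  match s with NE1 => 1 | NE2 => -1 | _ => 0 end.

Inductive spIV := L1 | L2 | E1 | E2.  (* Lambda_1, Lambda_2, D_1, D_2 *)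

Definition FIV (r1 r2 : R -> R -> R) (c : spIV -> R) (s : spIV) : R :=
  match s with
  | L1 => - r1 (c L1) (c E2) + r2 (c L2) (c E1)
  | L2 => r1 (c L1) (c E2) - r2 (c L2) (c E1)
  | _ => 0
  end.

Definition invIV (c c' : spIV -> R) : Prop :=
  c E1 = c' E1 /\ c E2 = c' E2 /\ c L1 + c L2 = c' L1 + c' L2.

Definition admIV (c : spIV -> R) : Prop := 0 < c E1 /\ 0 < c E2.

Definition homIV (c : spIV -> R) : Prop := c L1 = c L2 /\ c E1 = c E2.

Definition vIV (s : spIV) : R :=
  match s with L1 => 1 | L2 => -1 | _ => 0 end.

Inductive spV := V_L1 | V_NE1 | V_L2 | V_NE2.

Definition FV (r1 r2 : R -> R -> R -> R) (c : spV -> R) (s : spV) : R :=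
  match s with
  | V_NE1 => - r1 (c V_L1) (c V_NE1) (c V_L2) + r2 (c V_L2) (c V_NE2) (c V_L1)
  | V_NE2 => r1 (c V_L1) (c V_NE1) (c V_L2) - r2 (c V_L2) (c V_NE2) (c V_L1)
  | _ => 0
  end.

Definition invV (c c' : spV -> R) : Prop :=
  c V_L1 = c' V_L1 /\ c V_L2 = c' V_L2 /\
  c V_NE1 + c V_NE2 = c' V_NE1 + c' V_NE2.

Definition admV (c : spV -> R) : Prop := 0 < c V_L1 /\ 0 < c V_L2.

Definition homV (c : spV -> R) : Prop := c V_L1 = c V_L2 /\ c V_NE1 = c V_NE2.

Definition vV (s : spV) : R :=
  match s with V_NE1 => 1 | V_NE2 => -1 | _ => 0 end.

(* Main.v *)
Require Import Defs.
From Stdlib Require Import Reals Lra.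
From Coquelicot Require Import Coquelicot.
Open Scope R_scope.

Lemma incr0 (f : R -> R) :
  0 <= f 0 -> ~ 0 < f 0 -> (forall x, 0 < x -> 0 < f x) ->
  (forall x, 0 < x -> exists d, 0 < d /\ is_derive f x d) ->
  forall x y, 0 <= x -> x < y -> f x < f y.
Proof.
  intros H0 H0' Hp Hd x y Hx Hxy.
  destruct (Req_dec x 0) as [->|Hx0].
  { assert (f 0 = 0) by lra. rewrite H. apply Hp; lra. }
  apply (incr_function f 0 p_infty (fun t => Derive f t)); simpl; try lra; auto.
  - intros t Ht _. destruct (Hd t Ht) as [d [Hd1 Hd2]].
    rewrite (is_derive_unique _ _ _ Hd2). exact Hd2.
  - intros t Ht _. destruct (Hd t Ht) as [d [Hd1 Hd2]].
    rewrite (is_derive_unique _ _ _ Hd2). lra.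
Qed.

Definition sinc (f : R -> R) := forall x y, 0 <= x -> x < y -> f x < f y.

Lemma uniq_core (f g : R -> R) : sinc f -> sinc g ->
  forall x y x' y', 0 <= x -> 0 <= y -> 0 <= x' -> 0 <= y' ->
  x + y = x' + y' -> f x = g y -> f x' = g y' -> x = x' /\ y = y'.
Proof.
  intros sf sg x y x' y' H1 H2 H3 H4 E F1 F2.
  destruct (Rtotal_order x x') as [h|[h|h]].
  - exfalso. assert (f x < f x') by (apply sf; lra).
    assert (g y' < g y) by (apply sg; lra). lra.
  - split; lra.
  - exfalso. assert (f x' < f x) by (apply sf; lra).
    assert (g y < g y') by (apply sg; lra). lra.
Qed.

Lemma m3_sinc r a d : mono_chem3 r -> 0 < a -> 0 < d -> sinc (fun t => r a t d).
Proof.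
  intros [H1 [H2 H3]] Ha Hd. red. apply incr0.
  - apply H1; lra.
  - intro h. apply (H2 a 0 d) in h; lra.
  - intros x Hx. apply H2; try lra; auto.
  - intros x Hx. apply (H3 a x d Ha Hx Hd).
Qed.

Lemma m2_sinc r e : mono_chem2 r -> 0 < e -> sinc (fun t => r t e).
Proof.
  intros [H1 [H2 H3]] He. red. apply incr0.
  - apply H1; lra.
  - intro h. apply (H2 0 e) in h; lra.
  - intros x Hx. apply H2; try lra; auto.
  - intros x Hx. apply (H3 x e Hx He).
Qed.

Lemma der_sym (f : R -> R) x d : is_derive f x d ->
  is_derive (fun t => - f (x + t) + f (x - t)) 0 (- 2 * d).
Proof.
  intros H.
  assert (Ha : is_derive (fun t => f (x + t)) 0 d).
  { assert (P1 : is_derive (fun t => x + t) 0 1) by (auto_derive; [auto | simpl; ring]).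
    assert (P2 : is_derive f (x + 0) d) by (rewrite Rplus_0_r; exact H).
    pose proof (is_derive_comp f (fun t => x + t) 0 d 1 P2 P1) as P.
    change (scal 1 d) with (1 * d)%R in P; rewrite Rmult_1_l in P; exact P. }
  assert (Hb : is_derive (fun t => f (x - t)) 0 (-d)).
  { assert (P1 : is_derive (fun t => x - t) 0 (-1)) by (auto_derive; [auto | simpl; ring]).
    assert (P2 : is_derive f (x - 0) d) by (unfold Rminus; rewrite Ropp_0, Rplus_0_r; exact H).
    pose proof (is_derive_comp f (fun t => x - t) 0 d (-1) P2 P1) as P.
    change (scal (-1) d) with (-1 * d)%R in P; replace (-1 * d)%R with (-d)%R in P by ring; exact P. }
  replace (-2 * d) with (- d + - d) by ring.
  apply (is_derive_plus (fun t => - f (x + t)) (fun t => f (x - t))); auto.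
  apply (is_derive_opp (fun t => f (x + t))). auto.
Qed.

Theorem proposition4p2 :
  ((forall r1 r2, mono_chem3 r1 -> mono_chem3 r2 -> unique_ss (FII r1 r2) invII admII)
   /\ ~ capacity mono_chem3 FII homII vII) /\
  ((forall r1 r2, mono_chem2 r1 -> mono_chem2 r2 -> unique_ss (FIV r1 r2) invIV admIV)
   /\ ~ capacity mono_chem2 FIV homIV vIV) /\
  ((forall r1 r2, mono_chem3 r1 -> mono_chem3 r2 -> unique_ss (FV r1 r2) invV admV)
   /\ ~ capacity mono_chem3 FV homV vV).
Proof.
  split; [split|split; [split|split]].
  - intros r1 r2 m1 m2 c c' n n' [a1 [a2 [a3 a4]]] [i1 [i2 [i3 [i4 i5]]]] s s'.
    pose proof (s NE1) as S. pose proof (s' NE1) as S'. simpl in S, S'.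
    rewrite <- i1, <- i2, <- i3, <- i4 in S'.
    destruct (uniq_core _ _ (m3_sinc r1 _ _ m1 a1 a4) (m3_sinc r2 _ _ m2 a2 a3)
      (c NE1) (c NE2) (c' NE1) (c' NE2)) as [e1 e2]; auto; try lra.
    intros []; auto.
  - intros [r [[H1 [H2 H3]] [c [cp [[h1 [h2 h3]] [st D]]]]]].
    specialize (D NE1).
    destruct (H3 (c NI1) (c NE1) (c D2) (cp _) (cp _) (cp _)) as [_ [[d [Hd Hd']] _]].
    pose proof (der_sym _ _ _ Hd') as K.
    assert (K' : is_derive (fun t => FII r r (fun s' => c s' + t * vII s') NE1) 0 (-2*d)).
    { eapply is_derive_ext; [|exact K]. intro t; change R in t; simpl.
      rewrite h1, h3, <- h2. rewrite !Rmult_0_r, !Rplus_0_r, Rmult_1_r. replace (t * -1) with (-t) by ring. reflexivity. }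
    apply is_derive_unique in D. apply is_derive_unique in K'. lra.
  - intros r1 r2 m1 m2 c c' n n' [a1 a2] [i1 [i2 i3]] s s'.
    pose proof (s L1) as S. pose proof (s' L1) as S'. simpl in S, S'.
    rewrite <- i1, <- i2 in S'.
    destruct (uniq_core _ _ (m2_sinc r1 _ m1 a2) (m2_sinc r2 _ m2 a1)
      (c L1) (c L2) (c' L1) (c' L2)) as [e1 e2]; auto; try lra.
    intros []; auto.
  - intros [r [[H1 [H2 H3]] [c [cp [[h1 h2] [st D]]]]]].
    specialize (D L1).
    destruct (H3 (c L1) (c E2) (cp _) (cp _)) as [[d [Hd Hd']] _].
    pose proof (der_sym _ _ _ Hd') as K.
    assert (K' : is_derive (fun t => FIV r r (fun s' => c s' + t * vIV s') L1) 0 (-2*d)).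
    { eapply is_derive_ext; [|exact K]. intro t; change R in t; simpl.
      rewrite h2, <- h1. rewrite !Rmult_0_r, !Rplus_0_r, Rmult_1_r. replace (t * -1) with (-t) by ring. reflexivity. }
    apply is_derive_unique in D. apply is_derive_unique in K'. lra.
  - intros r1 r2 m1 m2 c c' n n' [a1 a2] [i1 [i2 i3]] s s'.
    pose proof (s V_NE1) as S. pose proof (s' V_NE1) as S'. simpl in S, S'.
    rewrite <- i1, <- i2 in S'.
    destruct (uniq_core _ _ (m3_sinc r1 _ _ m1 a1 a2) (m3_sinc r2 _ _ m2 a2 a1)
      (c V_NE1) (c V_NE2) (c' V_NE1) (c' V_NE2)) as [e1 e2]; auto; try lra.
    intros []; auto.
  - intros [r [[H1 [H2 H3]] [c [cp [[h1 h2] [st D]]]]]].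
    specialize (D V_NE1).
    destruct (H3 (c V_L1) (c V_NE1) (c V_L2) (cp _) (cp _) (cp _)) as [_ [[d [Hd Hd']] _]].
    pose proof (der_sym _ _ _ Hd') as K.
    assert (K' : is_derive (fun t => FV r r (fun s' => c s' + t * vV s') V_NE1) 0 (-2*d)).
    { eapply is_derive_ext; [|exact K]. intro t; change R in t; simpl.
      rewrite <- h1, <- h2. rewrite !Rmult_0_r, !Rplus_0_r, Rmult_1_r. replace (t * -1) with (-t) by ring. reflexivity. }
    apply is_derive_unique in D. apply is_derive_unique in K'. lra.
Qed.
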